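(* Let $r\ne0$ be an integer, $K$ a field of characteristic not dividing $2r$, and $E_r$ the elliptic curve $y^2=x^3-r^{-1}x$ over $K$, embedded in $\mathbb{P}^2$ as $x^3-rxz^2-ry^2z=0$ (the affine point $(x,y)$ corresponding to $(x:y:r^{-1})$, and $O=(0:1:0)$). Let $Q=(a,b)$ be an affine point of $E_r$ such that the translation $\tau_Q:P\mapsto P+Q$ of $E_r$ is the restriction to $E_r$ of some $\bar\varphi\in\mathrm{PGL}_3(K)$ with $\bar\varphi(E_r)\subseteq E_r$. Then $3r^2a^4-6ra^2-1=0$. *)

(* Defs.v *)
From mathcomp Require Import all_boot all_algebra.
Set Implicit Arguments. Unset Strict Implicit. Unset Printing Implicit Defensive.
Import GRing.Theory Num.Theory.
Local Open Scope ring_scope.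

(* The curve E_r : y^2 = x^3 - r^{-1} x over a field L (r : int cast into L).
   Points: None = O (point at infinity), Some (x, y) = affine point. *)
Definition ec_on (L : fieldType) (r : int) (P : option (L * L)) : bool :=
  match P with
  | None => true
  | Some (x, y) => y ^+ 2 == x ^+ 3 - (r%:~R)^-1 * x
  end.

Definition ec_add (L : fieldType) (r : int) (P Q : option (L * L)) :
    option (L * L) :=
  let A : L := - (r%:~R)^-1 in
  match P, Q with
  | None, _ => Q
  | _, None => P
  | Some (x1, y1), Some (x2, y2) =>
      if x1 == x2 then
        if y1 == - y2 then None
        else
          let l := (3%:R * x1 ^+ 2 + A) / (2%:R * y1) in
          let x3 := l ^+ 2 - x1 - x2 in
          Some (x3, l * (x1 - x3) - y1)
      else
        let l := (y2 - y1) / (x2 - x1) in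
        let x3 := l ^+ 2 - x1 - x2 in
        Some (x3, l * (x1 - x3) - y1)
  end.

Definition proj_curve (L : fieldType) (r : int) (v : 'cV[L]_3) : bool :=
  let x := v (inord 0) 0 in let y := v (inord 1) 0 in let z := v (inord 2) 0 in
  x ^+ 3 - r%:~R * x * z ^+ 2 - r%:~R * y ^+ 2 * z == 0.

Definition proj_pt (L : fieldType) (r : int) (P : option (L * L)) : 'cV[L]_3 :=
  match P with
  | None => \col_(i < 3) nth 0 [:: 0; 1; 0] i
  | Some (x, y) => \col_(i < 3) nth 0 [:: x; y; (r%:~R)^-1] i
  end.

Definition map_pt (K L : fieldType) (f : {rmorphism K -> L})
    (P : option (K * K)) : option (L * L) :=
  omap (fun q => (f q.1, f q.2)) P.

(* As E_r is a curve (variety), both conditions are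
   required on L-points for every field extension f : K -> L. *)
Definition translation_from_PGL3 (K : fieldType) (r : int)
    (Q : option (K * K)) : Prop :=
  exists M : 'M[K]_3, M \in unitmx /\
    forall (L : fieldType) (f : {rmorphism K -> L}),
      (forall v : 'cV[L]_3, v != 0 -> proj_curve r v ->
          proj_curve r (map_mx f M *m v)) /\
      (forall P : option (L * L), ec_on r P ->
          exists c : L, c != 0 /\
            map_mx f M *m proj_pt r P = c *: proj_pt r (ec_add r P (map_pt f Q))).

(* Main.v *)
Require Import Defs.
From mathcomp Require Import all_boot all_algebra all_field.
From mathcomp Require Import ring.
From Stdlib Require Import Classical.
Import GRing.Theory Num.Theory.
Local Open Scope ring_scope.
Set Implicit Arguments. Unset Strict Implicit.

Lemma proj_ptE (L : fieldType) (r : int) x y (i : 'I_3) :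
  proj_pt r (Some (x, y)) i 0 = nth 0 [:: x; y; (r%:~R : L)^-1] i.
Proof. by rewrite mxE. Qed.

Lemma proj_ptNE (L : fieldType) (r : int) (i : 'I_3) :
  proj_pt (L:=L) r None i 0 = nth 0 [:: 0; 1; 0] i.
Proof. by rewrite mxE. Qed.

Lemma vert (L : fieldType) (r : int) (M : 'M[L]_3) (x0 y0 : L) (q : option (L*L)) c1 c2 c3 :
  M *m proj_pt r (Some (x0, y0)) = c1 *: proj_pt r (ec_add r (Some (x0,y0)) q) ->
  M *m proj_pt r (Some (x0, -y0)) = c2 *: proj_pt r (ec_add r (Some (x0,-y0)) q) ->
  M *m proj_pt r None = c3 *: proj_pt r q ->
  c1 *: proj_pt r (ec_add r (Some (x0,y0)) q) - c2 *: proj_pt r (ec_add r (Some (x0,-y0)) q)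
   = (2 * y0 * c3) *: proj_pt r q.
Proof.
move=> <- <- H3.
have E : proj_pt r (Some (x0, y0)) - proj_pt r (Some (x0, -y0)) = (2 * y0) *: proj_pt (L:=L) r None.
  apply/matrixP => i j; rewrite ord1 !mxE.
  case: i => [[|[|[|i]]] Hi] //=; rewrite ?subrr ?mulr0 ?mulr1 //.
  by rewrite opprK mulr2n mulrDl mul1r.
by rewrite -mulmxBr E -scalemxAr H3 scalerA.
Qed.

Lemma caseb (K : fieldType) (r : int) (a b : K) (M : 'M[K]_3)
  (hr' : (r%:~R : K) != 0) (h2 : (2%:R : K) != 0) (hb : b != 0)
  (hQ : ec_on r (Some (a, b)))
  (H2 : forall P : option (K * K), ec_on r P ->
          exists c : K, c != 0 /\
            M *m proj_pt r P = c *: proj_pt r (ec_add r P (Some (a, b)))) :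
  3%:R * (r%:~R) ^+ 2 * a ^+ 4 - 6%:R * r%:~R * a ^+ 2 - 1 = 0 :> K.
Proof.
have [c1 [hc1 E1]] := H2 _ hQ.
have hQ' : ec_on r (Some (a, -b)) by rewrite /= sqrrN.
have [c2 [hc2 E2]] := H2 _ hQ'.
have [c3 [hc3 E3]] := H2 None isT.
have V := vert E1 E2 (E3 : _ = _ *: proj_pt r (Some (a, b))).
have hbb : (b == - b) = false.
  apply/negbTE; apply: contra hb => /eqP e.
  have : 2%:R * b = 0 by rewrite mulr2n mulrDl mul1r {1}e addNr.
  by move/eqP; rewrite mulf_eq0 (negbTE h2) /= => ->.
rewrite /= !eqxx hbb in V.
set ri := (r%:~R : K)^-1 in V hQ *.
set l := (3%:R * a ^+ 2 + - ri) / (2%:R * b) in V.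
have V0 := congr1 (fun v : 'cV[K]_3 => v ord0 0) V.
have V2 := congr1 (fun v : 'cV[K]_3 => v (@Ordinal 3 2 isT) 0) V.
rewrite /= !mxE /= in V0 V2.
move/eqP: hQ => hQ.
have hri : ri != 0 by rewrite invr_neq0.
rewrite mulr0 subr0 in V0; rewrite mulr0 subr0 in V2.
have ec1 : c1 = 2 * b * c3 by apply: (mulIf hri).
rewrite -ec1 in V0.
have hx : l ^+ 2 - a - a = a by apply: (mulfI hc1).
have hl2 : l ^+ 2 = 3%:R * a.
  have -> : l ^+ 2 = (l ^+ 2 - a - a) + a + a by ring.
  by rewrite hx; ring.
have hl : l * (2%:R * b) = 3%:R * a ^+ 2 - ri by rewrite /l divfK // mulf_neq0.
have key : (3%:R * a ^+ 2 - ri) ^+ 2 - 12%:R * a * (a ^+ 3 - ri * a) = 0.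
  by rewrite -hl -hQ exprMn hl2; ring.
transitivity (- (r%:~R) ^+ 2 * ((3%:R * a ^+ 2 - ri) ^+ 2 - 12%:R * a * (a ^+ 3 - ri * a))).
  rewrite /ri; field; exact: hr'.
by rewrite key mulr0.
Qed.

Lemma case0 (L : fieldType) (r : int) (a : L) (M : 'M[L]_3) (x0 y0 : L)
  (hr' : (r%:~R : L) != 0) (h2 : (2%:R : L) != 0)
  (hQ : a ^+ 3 - (r%:~R)^-1 * a = 0)
  (H2 : forall P : option (L * L), ec_on r P ->
          exists c : L, c != 0 /\
            M *m proj_pt r P = c *: proj_pt r (ec_add r P (Some (a, 0))))
  (hy : y0 != 0) (hx : x0 != a) (hP : y0 ^+ 2 = x0 ^+ 3 - (r%:~R)^-1 * x0) : False.
Proof.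
have hP1 : ec_on r (Some (x0, y0)) by rewrite /= hP.
have hP2 : ec_on r (Some (x0, - y0)) by rewrite /= sqrrN hP.
have [c1 [hc1 E1]] := H2 _ hP1.
have [c2 [hc2 E2]] := H2 _ hP2.
have [c3 [hc3 E3]] := H2 None isT.
have V := vert E1 E2 (E3 : _ = _ *: proj_pt r (Some (a, 0))).
rewrite /= (negbTE hx) !sub0r opprK in V.
set ri := (r%:~R : L)^-1 in V hQ hP *.
set d := a - x0 in V.
set l := y0 / d in V.
have hri : ri != 0 by rewrite invr_neq0.
have hd : d != 0 by rewrite subr_eq0 eq_sym.
rewrite mulNr sqrrN -/l in V.
set x3 := l ^+ 2 - x0 - a in V.
have V0 := congr1 (fun v : 'cV[L]_3 => v ord0 0) V.
have V2 := congr1 (fun v : 'cV[L]_3 => v (@Ordinal 3 2 isT) 0) V.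
rewrite /= !mxE /= in V0 V2.
have e2 : c1 - c2 = 2%:R * y0 * c3.
  apply: (mulIf hri); by rewrite mulrBl.
have hx3 : x3 = a.
  apply: (mulfI (_ : 2%:R * y0 * c3 != 0)); first by rewrite !mulf_neq0.
  by rewrite -[in LHS]e2 mulrBl V0.
have hy2 : y0 ^+ 2 = (x0 + 2%:R * a) * d ^+ 2.
  have : l ^+ 2 = x0 + 2%:R * a.
    have -> : l ^+ 2 = x3 + x0 + a by rewrite /x3; ring.
    by rewrite hx3; ring.
  by rewrite /l expr_div_n => <-; rewrite divfK // expf_neq0.
have e1 : x0 * (3%:R * a ^+ 2 - ri) - 2%:R * ri * a = 0.
  have -> : x0 * (3%:R * a ^+ 2 - ri) - 2%:R * ri * a =
    (x0 ^+ 3 - ri * x0 - (x0 + 2%:R * a) * d ^+ 2) + 2%:R * (a ^+ 3 - ri * a)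
    by rewrite /d; ring.
  by rewrite hQ -hP -hy2; ring.
have e3 : 2%:R * ri * a * (x0 - a) = 0.
  have -> : 2%:R * ri * a * (x0 - a) =
    a * (x0 * (3%:R * a ^+ 2 - ri) - 2%:R * ri * a) - 3%:R * x0 * (a ^+ 3 - ri * a)
    by ring.
  by rewrite e1 hQ; ring.
move/eqP: e3; rewrite !mulf_eq0 (negbTE h2) (negbTE hri) subr_eq0 (negbTE hx) /= orbF.
move/eqP => ha; rewrite ha in e1 hx.
have : x0 * ri = 0 by rewrite -[RHS]oppr0 -{1}e1; ring.
by move/eqP; rewrite mulf_eq0 (negbTE hri) (negbTE hx).
Qed.

Lemma case0' (K L : fieldType) (f : {rmorphism K -> L}) (r : int) (a : K) (M : 'M[K]_3)
  (x0 y0 : L) (hr' : (r%:~R : K) != 0) (h2 : (2%:R : K) != 0)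
  (hQ : a ^+ 3 - (r%:~R)^-1 * a = 0)
  (H2 : forall P : option (L * L), ec_on r P ->
          exists c : L, c != 0 /\
            map_mx f M *m proj_pt r P = c *: proj_pt r (ec_add r P (map_pt f (Some (a, 0)))))
  (hy : y0 != 0) (hx : x0 != f a) (hP : y0 ^+ 2 = x0 ^+ 3 - (r%:~R)^-1 * x0) : False.
Proof.
apply: (@case0 L r (f a) (map_mx f M) x0 y0) => //.
- by rewrite -(rmorph_int f) fmorph_eq0.
- by rewrite -(rmorph_nat f) fmorph_eq0.
- by rewrite -(rmorph_int f) -fmorphV -!rmorphXn -rmorphM -rmorphB hQ rmorph0.
- by move=> P /H2; rewrite /= rmorph0.
Qed.

Unset Implicit Arguments. Set Strict Implicit.

Theorem lemma3p6 (K : fieldType) (r : int) (a b : K)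
  (hr : r != 0) (hchar : (2 * r)%:~R != 0 :> K)
  (hQ : ec_on r (Some (a, b)))
  (htr : translation_from_PGL3 r (Some (a, b))) :
  3%:R * (r%:~R) ^+ 2 * a ^+ 4 - 6%:R * r%:~R * a ^+ 2 - 1 = 0 :> K.
Proof.
have [h2 hr'] : (2%:R : K) != 0 /\ (r%:~R : K) != 0.
  by move: hchar; rewrite intrM mulf_eq0 negb_or => /andP[].
have [M [hU H]] := htr.
have [hb | hb] := eqVneq b 0; last first.
  apply: (@caseb K r a b M hr' h2 hb hQ) => P hP.
  have [_ H2] := H K idfun.
  have [c [hc E]] := H2 P hP.
  exists c; split => //.
  have -> : M = map_mx idfun M by apply/matrixP => i j; rewrite mxE.
  by rewrite E.
exfalso.
subst b.
have hQ0 : a ^+ 3 - (r%:~R)^-1 * a = 0.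
  by move/eqP: hQ => /= <-; rewrite expr0n.
pose F := {fraction {poly K}}.
pose f1 : {rmorphism K -> F} := (@tofrac {poly K}) \o polyC.
pose t : F := tofrac 'X.
pose ri : F := (r%:~R)^-1.
pose g : F := t ^+ 3 - ri * t.
have hri : ri = f1 ((r%:~R)^-1) by rewrite fmorphV rmorph_int.
have htf : t != f1 a.
  rewrite /t /f1 /= tofrac_eq; apply/eqP => e.
  have := congr1 (fun p : {poly K} => size p) e; rewrite size_polyX size_polyC; by case: (a != 0).
have hg : g != 0.
  have -> : g = t * (t ^+ 2 - ri) by rewrite /g; ring.
  rewrite mulf_eq0 negb_or; apply/andP; split.
    by rewrite /t tofrac_eq0 polyX_eq0.
  rewrite subr_eq0 hri /t /f1 /= -rmorphXn tofrac_eq; apply/eqP => e.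
  have := congr1 (fun p : {poly K} => size p) e; rewrite size_polyXn size_polyC; by case: (_ != 0).
have H' := fun L f => (H L f).2.
case: (classic (exists s : F, s ^+ 2 = g)) => [[s hs] | hns].
  have hs0 : s != 0 by apply: contra hg => /eqP s0; rewrite -hs s0 expr0n.
  exact: (@case0' K F f1 r a M t s hr' h2 hQ0 (H' F f1) hs0 htf hs).
pose h : {poly F} := 'X^2 - g%:P.
have hsz : size h = 3%N by rewrite size_XnsubC.
have hI : monic_irreducible_poly h.
  split; last by rewrite monicXnsubC.
  apply: cubic_irreducible; first by rewrite hsz.
  move=> x; apply/negP => /rootP; rewrite !hornerE => e.
  by apply: hns; exists x; apply/eqP; rewrite -subr_eq0 e.
pose L : fieldType := {poly %/ h with hI}.
pose fq : {rmorphism F -> L} := qpolyC h.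
pose f2 : {rmorphism K -> L} := fq \o f1.
pose y0 : L := in_qpoly h 'X.
have hh0 : in_qpoly h h = 0.
  apply: val_inj; rewrite /= (mk_monicE hI) Pdiv.RingMonic.rmodpp //; exact: hI.2.
have hgC : in_qpoly h g%:P = qpolyC h g.
  apply: val_inj; rewrite [LHS]in_qpoly_small //= (mk_monicE hI) hsz size_polyC; by case: (_ != 0).
have hy2 : y0 ^+ 2 = fq g.
  rewrite expr2 /y0.
  transitivity (in_qpoly h ('X * 'X)); first exact: (esym (in_qpolyM _ _ _)).
  have -> : ('X * 'X : {poly F}) = h + g%:P by rewrite /h subrK expr2.
  by rewrite in_qpolyD hh0 add0r hgC.
have hy0 : y0 != 0.
  apply: contra hg => /eqP y00.
  have : fq g == 0 by rewrite -hy2 y00 expr0n.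
  by rewrite fmorph_eq0.
have hx0 : fq t != f2 a.
  by apply: contra htf => /eqP e; apply/eqP; exact: (fmorph_inj fq (e : fq t = fq (f1 a))).
have hP : y0 ^+ 2 = fq t ^+ 3 - (r%:~R)^-1 * fq t.
  by rewrite hy2 /g rmorphB (rmorphM fq ri t) (rmorphXn fq 3 t) /ri fmorphV rmorph_int.
exact: (@case0' K L f2 r a M (fq t) y0 hr' h2 hQ0 (H' L f2) hy0 hx0 hP).
Qed.
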